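(* Any two welded knot diagrams $K$ and $K'$ are diagonal-equivalent, i.e. one can be obtained from the other by a finite sequence of diagonal moves and classical and welded Reidemeister moves.
   Context: A welded knot diagram is a knot diagram that may have welded (virtual) crossings as well as classical crossings; welded knots are equivalence classes of welded knot diagrams under the three classical Reidemeister moves and the welded Reidemeister moves (the virtual Reidemeister moves together with the move allowing a strand passing over to slide past a welded crossing). A diagonal move (D-move) is a local move on a diagram defined as follows. Consider a disk in which the diagram consists of four arcs $a,b,c,d$ arranged in a ''$\#$'' pattern: $a$ and $c$ do not meet each other, $b$ and $d$ do not meet each other, and each of $a,c$ crosses each of $b,d$ exactly once in a classical crossing, giving four crossings labelled $1,2,3,4$ in cyclic order around the central square. The pairs $\{1,3\}$ and $\{2,4\}$ are the diagonal crossing pairs. A diagonal move changes the over/under information at both crossings of one diagonal pair and leaves the rest of the diagram unchanged; it is allowed for every choice of orientations of the arcs. *)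

(* Defs.v *)
From HB Require Import structures.
From mathcomp Require Import all_boot all_order all_algebra.
From Stdlib Require Import Relations.
Set Implicit Arguments. Unset Strict Implicit. Unset Printing Implicit Defensive.
Import Order.TTheory GRing.Theory Num.Theory.

(* A letter (c, o, s) records a passage of the knot through crossing c,
   o = true when the knot passes OVER at this passage, s = true when the
   crossing is positive.  A knot diagram (with classical and welded/virtual
   crossings, the latter being invisible) is a cyclic Gauss word. *)
Definition letter := (nat * bool * bool)%type.
Definition lab (l : letter) : nat := l.1.1.

Definition gauss_ok (w : seq letter) : Prop :=
  forall c, c \in map lab w ->
    exists s : bool,
      perm_eq [seq l <- w | lab l == c] [:: (c, true, s); (c, false, s)].

(* A local move replaces, inside a disk, strand fragments F by F' (strand i
   of F and of F' have the same endpoints).  Outside the disk the strands are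
   connected in an arbitrary order [ord] by arbitrary words [us]. *)
Definition place (frs us : seq (seq letter)) : seq letter :=
  flatten [seq p.1 ++ p.2 | p <- zip frs us].

Definition local_move (F F' : seq (seq letter)) (w w' : seq letter) : Prop :=
  size F = size F' /\
  exists (ord : seq nat) (us : seq (seq letter)),
    [/\ perm_eq ord (iota 0 (size F)), size us = size F,
        w = place [seq nth [::] F i | i <- ord] us &
        w' = place [seq nth [::] F' i | i <- ord] us].

Local Open Scope ring_scope.
Definition vec := (rat * rat)%type.
Definition det (u v : vec) : rat := u.1 * v.2 - u.2 * v.1.
Definition vsub (u v : vec) : vec := (u.1 - v.1, u.2 - v.2).
Definition orient (b : bool) (v : vec) : vec := if b then v else (- v.1, - v.2).
Definition line := (vec * vec)%type.
Definition lpt (L : line) : vec := L.1.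
Definition ldir (L : line) : vec := L.2.
(* parameter t with  lpt Li + t * ldir Li  on Lj *)
Definition cross_param (Li Lj : line) : rat :=
  det (vsub (lpt Lj) (lpt Li)) (ldir Lj) / det (ldir Li) (ldir Lj).

Record picture := Picture {
  pic_lines : seq line;
  pic_label : nat -> nat -> nat;   (* label of crossing of strands i < j *)
  pic_over : nat -> nat -> bool;   (* for i < j : strand i is over strand j *)
  pic_mirror : bool                (* sign convention / mirror image *)
}.

Definition strand (P : picture) (i : nat) : line :=
  nth ((0, 0), (0, 0)) (pic_lines P) i.
Definition crosses (P : picture) (i j : nat) : bool :=
  (i != j) && (det (ldir (strand P i)) (ldir (strand P j)) != 0).
Definition xlabel (P : picture) (i j : nat) : nat := pic_label P (minn i j) (maxn i j).
Definition xover (P : picture) (i j : nat) : bool :=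
  if (i < j)%N then pic_over P i j else ~~ pic_over P j i.
Definition xsign (P : picture) (i j : nat) : bool :=
  let o := if xover P i j then i else j in
  let u := if xover P i j then j else i in
  addb (0 < det (ldir (strand P o)) (ldir (strand P u))) (pic_mirror P).
(* the letters met along strand i, in the order of its orientation *)
Definition fragment (P : picture) (i : nat) : seq letter :=
  [seq (xlabel P i j, xover P i j, xsign P i j) |
     j <- sort (fun j k => cross_param (strand P i) (strand P j)
                           <= cross_param (strand P i) (strand P k))
               [seq j <- iota 0 (size (pic_lines P)) | crosses P i j]].
Definition fragments (P : picture) : seq (seq letter) :=
  [seq fragment P i | i <- iota 0 (size (pic_lines P))].

Definition rotation_step (w w' : seq letter) : Prop :=
  exists u v, w = u ++ v /\ w' = v ++ u.

Definition relabel_step (w w' : seq letter) : Prop :=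
  exists f : nat -> nat, injective f /\ w' = [seq (f l.1.1, l.1.2, l.2) | l <- w].

Definition R1_move (w w' : seq letter) : Prop :=
  exists (c : nat) (o s : bool),
    local_move [:: [:: (c, o, s); (c, ~~ o, s)]] [:: [::]] w w'.

(* strand 0 passes over strand 1 twice; parallel or antiparallel *)
Definition R2_move (w w' : seq letter) : Prop :=
  exists (c d : nat) (s par : bool),
    local_move
      [:: [:: (c, true, s); (d, true, ~~ s)];
          if par then [:: (c, false, s); (d, false, ~~ s)]
                 else [:: (d, false, ~~ s); (c, false, s)]]
      [:: [::]; [::]] w w'.

(* three strands forming a triangle; the third strand is moved across the
   crossing of the other two (h = 1 before, h = -1 after) *)
Definition r3_lines (o0 o1 o2 : bool) (h : rat) : seq line :=
  [:: ((0, 0), orient o0 (1, 0)); ((0, 0), orient o1 (1, 1));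
      ((0, h), orient o2 (1, -1))].
Definition r3_picture (o0 o1 o2 : bool) (ht : nat -> nat) (lb : nat -> nat -> nat)
    (mir : bool) (h : rat) : picture :=
  Picture (r3_lines o0 o1 o2 h) lb (fun i j => (ht j < ht i)%N) mir.
Definition R3_move (w w' : seq letter) : Prop :=
  exists (o0 o1 o2 : bool) (ht : nat -> nat) (lb : nat -> nat -> nat) (mir : bool),
    uniq [:: ht 0%N; ht 1%N; ht 2%N] /\
    local_move (fragments (r3_picture o0 o1 o2 ht lb mir 1))
               (fragments (r3_picture o0 o1 o2 ht lb mir (-1))) w w'.

(* welded move: two adjacent over-passages commute *)
Definition OC_move (w w' : seq letter) : Prop :=
  exists (c d : nat) (s t : bool),
    local_move [:: [:: (c, true, s); (d, true, t)]]
               [:: [:: (d, true, t); (c, true, s)]] w w'.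

(* the "#" : a = strand 0 (y = 1), b = strand 1 (x = 0), c = strand 2 (y = 0),
   d = strand 3 (x = 1); crossings 1 = a/b, 2 = b/c, 3 = c/d, 4 = d/a *)
Definition d_lines (oa ob oc od : bool) : seq line :=
  [:: ((0, 1), orient oa (1, 0)); ((0, 0), orient ob (0, 1));
      ((0, 0), orient oc (1, 0)); ((1, 0), orient od (0, 1))].
Definition diag_flip (diag13 : bool) (i j : nat) : bool :=
  if diag13 then ((i, j) == (0, 1)%N) || ((i, j) == (2, 3)%N)
  else ((i, j) == (1, 2)%N) || ((i, j) == (0, 3)%N).
Definition D_move (w w' : seq letter) : Prop :=
  exists (oa ob oc od : bool) (ov : nat -> nat -> bool) (lb : nat -> nat -> nat)
         (mir diag13 : bool),
    local_move (fragments (Picture (d_lines oa ob oc od) lb ov mir))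
               (fragments (Picture (d_lines oa ob oc od) lb
                                   (fun i j => addb (ov i j) (diag_flip diag13 i j)) mir))
               w w'.

Definition welded_step (w w' : seq letter) : Prop :=
  rotation_step w w' \/ relabel_step w w' \/ R1_move w w' \/ R2_move w w' \/
  R3_move w w' \/ OC_move w w'.

Definition diag_step (w w' : seq letter) : Prop :=
  gauss_ok w /\ gauss_ok w' /\ (welded_step w w' \/ D_move w w').

Definition diag_equivalent : relation (seq letter) :=
  clos_refl_sym_trans (seq letter) diag_step.

(* Main.v *)
Require Import Defs.
From HB Require Import structures.
From mathcomp Require Import all_boot all_order all_algebra.
From mathcomp Require Import zify ring.
From Stdlib Require Import Relations.


Ltac perm_tac := apply/permP => ?; rewrite /=; do 4 (rewrite ?count_cat /=); ring.

Lemma filter_nolab r c : c \notin map lab r -> [seq l <- r | lab l == c] = [::].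
Proof.
elim: r => //= a r IH; rewrite inE negb_or => /andP[ha hr].
by rewrite eq_sym (negbTE ha) IH.
Qed.

Lemma nolab_filter r c : [seq l <- r | lab l == c] = [::] -> c \notin map lab r.
Proof.
elim: r => //= a r IH; case: ifP => // h /IH hr; by rewrite inE negb_or eq_sym h.
Qed.

Lemma gauss_perm u v : perm_eq u v -> gauss_ok u -> gauss_ok v.
Proof.
move=> puv gu c cv.
have cu : c \in map lab u by rewrite (perm_mem (perm_map lab puv)).
have [s P] := gu c cu; exists s.
apply: perm_trans P; rewrite perm_sym; exact: perm_filter.
Qed.

Lemma gauss_cons2 c o s r : c \notin map lab r -> gauss_ok r ->
  gauss_ok ((c,o,s)::(c,~~o,s)::r).
Proof.
move=> cr gr d; rewrite /= !inE.
case: (eqVneq c d) => [<- _|ne].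
  rewrite /lab /= ?eqxx filter_nolab //; exists s.
  by case: o => //; rewrite /perm_eq /= ?xpair_eqE ?eqxx.
rewrite /= => dr; exact: gr.
Qed.

Lemma gauss_tail a b r : gauss_ok (a::b::r) -> lab a = lab b -> gauss_ok r.
Proof.
move=> g hab d dr.
have : d \in map lab (a::b::r) by rewrite /= !inE dr !orbT.
move/g => [s P].
move: P; rewrite /= -hab; case: (eqVneq (lab a) d) => [ad|ad] P; last by exists s.
have := perm_size P; rewrite /= => /eqP; rewrite !eqSS size_eq0 => /eqP /nolab_filter.
by rewrite dr.
Qed.

Lemma gauss_nil : gauss_ok [::].
Proof. by move=> c. Qed.

Definition flipc (e : nat) (l : letter) : letter :=
  if lab l == e then (l.1.1, ~~ l.1.2, ~~ l.2) else l.

Lemma lab_flip e l : lab (flipc e l) = lab l.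
Proof. by rewrite /flipc; case: ifP. Qed.

Lemma labs_flip e w : map lab (map (flipc e) w) = map lab w.
Proof. by rewrite -map_comp; apply: eq_map => l /=; rewrite lab_flip. Qed.

Lemma flip_nolab e m : e \notin map lab m -> map (flipc e) m = m.
Proof.
elim: m => //= a m IH; rewrite inE negb_or => /andP[h1 h2].
by rewrite IH // /flipc eq_sym (negbTE h1).
Qed.

Lemma gauss_flip e w : gauss_ok w -> gauss_ok (map (flipc e) w).
Proof.
move=> g d; rewrite labs_flip => /g [s P].
rewrite filter_map.
rewrite (eq_filter (a2 := fun l => lab l == d)); last by move=> l /=; rewrite lab_flip.
have := perm_map (flipc e) P; rewrite /= /flipc /lab /=.
case: (eqVneq d e) => [->|ne] Q.
  exists (~~ s); apply: (perm_trans Q); by rewrite /perm_eq /= ?xpair_eqE ?eqxx.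
by exists s; move: Q; rewrite ?(negbTE ne).
Qed.

Lemma first_occ w e : e \in map lab w ->
  exists w1 a w2, w = w1 ++ a :: w2 /\ lab a = e /\ e \notin map lab w1.
Proof.
elim: w => //= a w IH; rewrite inE; case: (eqVneq e (lab a)) => [->|ne] /= h.
  by exists [::], a, w.
have [w1 [b [w2 [-> [hb h1]]]]] := IH h.
exists (a :: w1), b, w2; split=> //; split=> //; by rewrite /= inE negb_or ne.
Qed.

Lemma perm2 (e : nat) (oa ob sa sb s : bool) :
  perm_eq [:: (e,oa,sa); (e,ob,sb)] [:: (e,true,s); (e,false,s)] ->
  (oa = true /\ ob = false /\ sa = s /\ sb = s) \/ (oa = false /\ ob = true /\ sa = s /\ sb = s).
Proof.
case: oa; case: ob; case: sa; case: sb; case: s; rewrite /perm_eq /= ?xpair_eqE ?eqxx //=; auto.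
Qed.

Lemma decomp w e : gauss_ok w -> e \in map lab w ->
  exists s m n u v, w = u ++ v /\ v ++ u = (e,true,s) :: m ++ (e,false,s) :: n /\
    e \notin map lab m /\ e \notin map lab n /\ gauss_ok (m ++ n).
Proof.
move=> g ew.
have [s P] := g e ew.
have [w1 [a [w2 [dw [la n1]]]]] := @first_occ _ _ ew.
move: P; rewrite dw filter_cat filter_nolab //= la eqxx => P.
have w2e : e \in map lab w2.
  apply/negPn/negP => /filter_nolab h; move: P; rewrite h => /perm_size //.
have [w3 [b [w4 [dw2 [lb n3]]]]] := @first_occ _ _ w2e.
move: P; rewrite dw2 filter_cat filter_nolab //= lb eqxx => P.
have n4 : e \notin map lab w4.
  apply: nolab_filter; have := perm_size P => /= /eqP; by rewrite !eqSS size_eq0 => /eqP.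
move: P; rewrite (@filter_nolab _ _ n4).
move: a b la lb dw dw2 => [[ea oa] sa] [[eb ob] sb]; rewrite /lab /= => -> -> dw dw2 P.
have gcore : forall s' m n, perm_eq w ((e,true,s')::(e,false,s')::(m++n)) -> gauss_ok (m ++ n).
  move=> s' m n Q; apply: (@gauss_tail (e,true,s') (e,false,s')) => //.
  exact: gauss_perm Q g.
case: (perm2 _ _ _ _ _ _ P) => [[Ha [Hb [Hc Hd]]]|[Ha [Hb [Hc Hd]]]]; subst oa ob sa sb.
- exists s, w3, (w4 ++ w1), w1, ((e,true,s) :: w3 ++ (e,false,s) :: w4).
  split; first by [].
  split; first by rewrite /= -catA.
  split=> //; split; first by rewrite map_cat mem_cat negb_or n4.
  apply: (gcore s); rewrite dw dw2; perm_tac.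
- exists s, (w4 ++ w1), w3, (w1 ++ (e,false,s) :: w3), ((e,true,s) :: w4).
  split; first by rewrite -catA.
  split; first by rewrite /= -catA.
  split; first by rewrite map_cat mem_cat negb_or n4.
  split=> //.
  apply: (gcore s); rewrite dw dw2; perm_tac.
Qed.



Lemma dstep w w' : gauss_ok w -> gauss_ok w' -> welded_step w w' \/ D_move w w' ->
  diag_equivalent w w'.
Proof. by move=> g g' h; apply: rst_step; split; [|split]. Qed.

Lemma rotw w w' u v : w = u ++ v -> w' = v ++ u -> gauss_ok w -> diag_equivalent w w'.
Proof.
move=> -> -> g; apply: dstep => //; first by apply: gauss_perm g; perm_tac.
by left; left; exists u, v.
Qed.

Definition ovD (i j : nat) : bool := [|| (i,j) == (0,1)%N, (i,j) == (0,3)%N | (i,j) == (2,3)%N].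
Definition lbD (x p r y : nat) (i j : nat) : nat :=
  if (i,j) == (0,1)%N then x else if (i,j) == (0,3)%N then p else if (i,j) == (1,2)%N then r else y.

Lemma fragA x p r y mir :
  fragments (Picture (d_lines false false true true) (lbD x p r y) ovD mir) =
  [:: [:: (p,true,mir); (x,true,~~mir)]; [:: (x,false,~~mir); (r,false,mir)];
      [:: (r,true,mir); (y,true,~~mir)]; [:: (y,false,~~mir); (p,false,mir)]].
Proof. by case: mir; vm_compute. Qed.

Lemma fragB x p r y mir :
  fragments (Picture (d_lines false false true true) (lbD x p r y)
     (fun i j => addb (ovD i j) (diag_flip true i j)) mir) =
  [:: [:: (p,true,mir); (x,false,mir)]; [:: (x,true,mir); (r,false,mir)];
      [:: (r,true,mir); (y,false,mir)]; [:: (y,true,mir); (p,false,mir)]].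
Proof. by case: mir; vm_compute. Qed.



Definition W3 (N : nat) (s : bool) (X1 X2 Y1 Y2 : letter) (m n : seq letter) : seq letter :=
  [:: (N,true,~~s); X1] ++ m ++ [:: X2; (N+2,false,~~s)] ++
  ((N+3,false,s) :: n ++ [:: (N+3,true,s)]) ++ [:: (N+2,true,~~s); Y1] ++
  [:: Y2; (N,false,~~s)] ++ [:: (N+1,false,s); (N+1,true,s)].

Ltac fresh_tac Hf := rewrite /= ?inE ?negb_or /lab /=; repeat (apply/andP; split);
   try (apply: Hf; lia); lia.

Lemma gauss_W3 (m n : seq letter) (x N : nat) (s o1 s1 yo ys : bool) :
  gauss_ok (m ++ n) -> x \notin map lab (m ++ n) -> (x < N)%N ->
  (forall k, (N <= k)%N -> k \notin map lab (m ++ n)) ->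
  gauss_ok (W3 N s (x,o1,s1) (x,~~o1,s1) (N+4,yo,ys) (N+4,~~yo,ys) m n) /\
  gauss_ok ((N+4,yo,ys) :: (N+4,~~yo,ys) :: (N+3,true,s) :: (N+3,false,s) ::
            (N+2,true,~~s) :: (N+2,false,~~s) :: (N+1,true,s) :: (N+1,false,s) ::
            (N,true,~~s) :: (N,false,~~s) :: (x,o1,s1) :: (x,~~o1,s1) :: (m ++ n)).
Proof.
move=> g hx xN Hf.
have G : gauss_ok ((N+4,yo,ys) :: (N+4,~~yo,ys) :: (N+3,true,s) :: (N+3,false,s) ::
            (N+2,true,~~s) :: (N+2,false,~~s) :: (N+1,true,s) :: (N+1,false,s) ::
            (N,true,~~s) :: (N,false,~~s) :: (x,o1,s1) :: (x,~~o1,s1) :: (m ++ n)).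
  apply: gauss_cons2; first by fresh_tac Hf.
  apply: (@gauss_cons2 _ true); first by fresh_tac Hf.
  apply: (@gauss_cons2 _ true); first by fresh_tac Hf.
  apply: (@gauss_cons2 _ true); first by fresh_tac Hf.
  apply: (@gauss_cons2 _ true); first by fresh_tac Hf.
  apply: gauss_cons2; first exact: hx.
  exact: g.
split=> //; apply: gauss_perm G; rewrite /W3; perm_tac.
Qed.


Ltac unf := repeat match goal with | x := _ |- _ => subst x end.
Ltac gp G := unf; apply: (@gauss_perm _ _ _ G); rewrite /W3; perm_tac.
Ltac plc := rewrite /place /= ?cats0 -?catA /= ?cats0 -?catA //.

Lemma build (m n : seq letter) (x N : nat) (s o1 s1 yo ys : bool) :
  gauss_ok (m ++ n) -> x \notin map lab (m ++ n) -> (x < N)%N ->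
  (forall k, (N <= k)%N -> k \notin map lab (m ++ n)) ->
  diag_equivalent ((x,o1,s1) :: m ++ (x,~~o1,s1) :: n)
                  (W3 N s (x,o1,s1) (x,~~o1,s1) (N+4,yo,ys) (N+4,~~yo,ys) m n).
Proof.
move=> g hx xN Hf.
have [_ G] := @gauss_W3 m n x N s o1 s1 yo ys g hx xN Hf.
set X1 : letter := (x,o1,s1); set X2 : letter := (x,~~o1,s1).
set QT : letter := (N+1,true,s); set PT : letter := (N,true,~~s); set PF : letter := (N,false,~~s); set QF : letter := (N+1,false,s).
set TT : letter := (N+3,true,s); set RT : letter := (N+2,true,~~s); set RF : letter := (N+2,false,~~s); set TF : letter := (N+3,false,s).
set Y1 : letter := (N+4,yo,ys); set Y2 : letter := (N+4,~~yo,ys).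
set W0 := X1 :: m ++ X2 :: n.
set W1 := QT :: PT :: X1 :: m ++ X2 :: n ++ [:: PF; QF].
set W1r := [:: PF; QF] ++ QT :: PT :: X1 :: m ++ X2 :: n.
set W2r := [:: TT; RT] ++ (PF::QF::QT::PT::X1::m ++ [:: X2]) ++ [:: RF; TF] ++ n.
set W2s := (PF::QF::QT::PT::X1::m ++ [:: X2]) ++ [:: RF; TF] ++ n ++ [:: TT; RT].
set W3s := [:: Y1; Y2] ++ W2s.
have G2 := gauss_tail _ _ _ G erefl.
have G1 := gauss_tail _ _ _ (gauss_tail _ _ _ G2 erefl) erefl.
have G0 := gauss_tail _ _ _ (gauss_tail _ _ _ G1 erefl) erefl.
Time have g0 : gauss_ok W0 by gp G0.
Time have g1 : gauss_ok W1 by gp G1.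
Time have g1r : gauss_ok W1r by gp G1.
Time have g2r : gauss_ok W2r by gp G2.
Time have g2s : gauss_ok W2s by gp G2.
Time have g3s : gauss_ok W3s by gp G.
apply: (@rst_trans _ _ _ W1).
  apply: rst_sym; apply: dstep => //; left; right; right; right; left.
  exists (N+1), N, s, false; split=> //.
  exists [:: 0; 1]%N, [:: X1 :: m ++ X2 :: n; [::]]; split=> //; unf; plc.
apply: (@rst_trans _ _ _ W1r).
  apply: (@rotw _ _ (QT :: PT :: X1 :: m ++ X2 :: n) [:: PF; QF]) => //; unf; plc.
apply: (@rst_trans _ _ _ W2r).
  apply: rst_sym; apply: dstep => //; left; right; right; right; left.
  exists (N+3), (N+2), s, false; split=> //.
  exists [:: 0; 1]%N, [:: PF::QF::QT::PT::X1::m ++ [:: X2]; n]; split=> //; unf; plc.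
apply: (@rst_trans _ _ _ W2s).
  apply: (@rotw _ _ [:: TT; RT] (PF::QF::QT::PT::X1::m ++ [:: X2] ++ [:: RF; TF] ++ n)) => //; unf; plc.
apply: (@rst_trans _ _ _ W3s).
  apply: rst_sym; apply: dstep => //; left; right; right; left.
  exists (N+4), yo, ys; split=> //.
  exists [:: 0]%N, [:: W2s]; split=> //; unf; plc.
apply: (@rotw _ _ [:: Y1; Y2; PF; QF; QT] (PT::X1::m ++ X2::RF::TF::n ++ [:: TT; RT])) => //; unf; rewrite /W3; plc.
Qed.



Lemma sumn_ge (l : nat) (s : seq nat) : l \in s -> (l <= sumn s)%N.
Proof.
elim: s => //= a s IH; rewrite inE => /orP [/eqP ->|/IH]; lia.
Qed.

Lemma xchange (m n : seq letter) (x : nat) (s : bool) :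
  gauss_ok (m ++ n) -> x \notin map lab (m ++ n) ->
  diag_equivalent ((x,true,s) :: m ++ (x,false,s) :: n)
                  ((x,false,~~s) :: m ++ (x,true,~~s) :: n).
Proof.
move=> g hx.
pose N := (x + sumn (map lab (m ++ n))).+1.
have xN : (x < N)%N by rewrite /N; lia.
have Hf : forall k, (N <= k)%N -> k \notin map lab (m ++ n).
  move=> k Hk; apply/negP => /sumn_ge; rewrite /N in Hk; lia.
apply: (rst_trans _ _ _ _ _ (build m n x N s true s true s g hx xN Hf)).
apply: (rst_trans _ _ _ _ _ _ (rst_sym _ _ _ _ (build m n x N s false (~~s) false (~~s) g hx xN Hf))).
have [gA _] := @gauss_W3 m n x N s true s true s g hx xN Hf.
have [gB _] := @gauss_W3 m n x N s false (~~s) false (~~s) g hx xN Hf.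
apply: dstep => //; right.
exists false, false, true, true, ovD, (lbD x N (N+2) (N+4)), (~~s), true.
rewrite fragA fragB negbK; split=> //.
exists [:: 0; 1; 2; 3]%N,
  [:: m; (N+3,false,s) :: n ++ [:: (N+3,true,s)]; [::]; [:: (N+1,false,s); (N+1,true,s)]].
split=> //; rewrite /W3; plc.
Qed.



Lemma cc w e : gauss_ok w -> e \in map lab w -> diag_equivalent w (map (flipc e) w).
Proof.
move=> g he.
have [s [m [n [u [v [dw [dvu [hm [hn gmn]]]]]]]]] := decomp w e g he.
have hx : e \notin map lab (m ++ n) by rewrite map_cat mem_cat negb_or hm hn.
have gvu : gauss_ok (v ++ u) by apply: (@gauss_perm _ _ _ g); rewrite dw; perm_tac.
apply: (rst_trans _ _ _ _ _ (rotw _ (v ++ u) u v dw erefl g)).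
have HY : map (flipc e) (v ++ u) = (e,false,~~s) :: m ++ (e,true,~~s) :: n.
  by rewrite dvu /= map_cat /= (flip_nolab _ _ hm) (flip_nolab _ _ hn) /flipc /lab /= eqxx.
apply: (rst_trans _ _ _ (map (flipc e) (v ++ u))).
  rewrite HY dvu; exact: xchange.
apply: (rotw _ _ (map (flipc e) v) (map (flipc e) u)).
- by rewrite map_cat.
- by rewrite dw map_cat.
- exact: gauss_flip.
Qed.

Lemma inner k : forall v1 v2 c s, size v1 = k -> c \notin map lab v1 -> c \notin map lab v2 ->
  gauss_ok (v1 ++ v2) ->
  exists w', size w' = (size v1 + size v2)%N /\ gauss_ok w' /\
    diag_equivalent ((c,true,s) :: v1 ++ (c,false,s) :: v2) w'.
Proof.
elim: k => [|k IH] [|[[e ob] sb] v1] v2 c s //= Hk h1 h2 g.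
  exists v2; split=> //; split=> //.
  apply: dstep => //; first exact: (@gauss_cons2 c true s v2 h2 g).
  left; right; right; left; exists c, true, s; split=> //.
  exists [:: 0]%N, [:: v2]; split=> //; plc.
move: h1; rewrite inE negb_or => /andP [hce h1]; rewrite /lab /= in hce.
have [v1' [v2' [sb' [Hs1 [Hs2 [h1' [h2' [gb E]]]]]]]] :
  exists v1' v2' sb', size v1' = size v1 /\ size v2' = size v2 /\ c \notin map lab v1' /\
    c \notin map lab v2' /\ gauss_ok ((e,true,sb') :: v1' ++ v2') /\
    diag_equivalent ((c,true,s) :: (e,ob,sb) :: v1 ++ (c,false,s) :: v2)
                    ((c,true,s) :: (e,true,sb') :: v1' ++ (c,false,s) :: v2').
  case: ob g => g.
    by exists v1, v2, sb; do 5 (split=> //); apply: rst_refl.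
  have fe : flipc e (e,false,sb) = (e,true,~~sb) by rewrite /flipc /lab /= eqxx.
  have fc : forall o, flipc e (c,o,s) = (c,o,s).
    by move=> o; rewrite /flipc /lab /= (negbTE hce).
  exists (map (flipc e) v1), (map (flipc e) v2), (~~sb).
  rewrite !size_map !labs_flip; do 4 (split=> //); split.
    by have := gauss_flip e _ g; rewrite /= map_cat fe.
  have G : gauss_ok ((c,true,s) :: (e,false,sb) :: v1 ++ (c,false,s) :: v2).
    apply: (@gauss_perm ((c,true,s) :: (c,false,s) :: (e,false,sb) :: v1 ++ v2)); first by perm_tac.
    apply: gauss_cons2 => //; by rewrite /= inE negb_or hce map_cat mem_cat negb_or h1 h2.
  have := cc _ e G; rewrite /= !map_cat /= !fc fe; apply; by rewrite /= !inE /lab /= eqxx orbT.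
have hcb : c \notin map lab ((e,true,sb') :: v1' ++ v2').
  by rewrite /= inE negb_or hce map_cat mem_cat negb_or h1' h2'.
have G1 : gauss_ok ((c,true,s) :: (e,true,sb') :: v1' ++ (c,false,s) :: v2').
  apply: (@gauss_perm ((c,true,s) :: (c,false,s) :: (e,true,sb') :: v1' ++ v2')); first by perm_tac.
  exact: gauss_cons2.
have G2 : gauss_ok ((e,true,sb') :: (c,true,s) :: v1' ++ (c,false,s) :: v2').
  by apply: (@gauss_perm _ _ _ G1); perm_tac.
have Hsz : size v1' = k by rewrite Hs1; apply/eqP; rewrite -eqSS; apply/eqP.
have H2 : c \notin map lab (v2' ++ [:: (e,true,sb')]).
  rewrite map_cat mem_cat negb_or h2' /= ?inE ?negb_or /lab /= ?andbT; by [].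
have G3 : gauss_ok (v1' ++ v2' ++ [:: (e,true,sb')]).
  by apply: (@gauss_perm _ _ _ gb); perm_tac.
have [w' [Hw [gw E']]] := IH v1' (v2' ++ [:: (e,true,sb')]) c s Hsz h1' H2 G3.
exists w'; split; first by rewrite Hw size_cat Hs1 Hs2 /=; lia.
split=> //.
apply: (rst_trans _ _ _ _ _ E).
apply: (rst_trans _ _ _ _ _ _ E').
apply: (rst_trans _ _ _ ((e,true,sb') :: (c,true,s) :: v1' ++ (c,false,s) :: v2')).
  apply: dstep => //; left; right; right; right; right; right.
  exists c, e, s, sb'; split=> //.
  exists [:: 0]%N, [:: v1' ++ (c,false,s) :: v2']; split=> //; plc.
apply: (rotw _ _ [:: (e,true,sb')] ((c,true,s) :: v1' ++ (c,false,s) :: v2')) => //.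
by rewrite /= -catA.
Qed.

Lemma to_nil k : forall w, (size w <= k)%N -> gauss_ok w -> diag_equivalent w [::].
Proof.
elim: k => [|k IH] [|a w] //= Hs g; try exact: rst_refl.
have he : lab a \in map lab (a :: w) by rewrite /= inE eqxx.
have [s [m [n [u [v [dw [dvu [hm [hn gmn]]]]]]]]] := decomp _ _ g he.
apply: (rst_trans _ _ _ _ _ (rotw _ (v ++ u) u v dw erefl g)).
rewrite dvu.
have [w' [Hw [gw E]]] := inner (size m) m n (lab a) s erefl hm hn gmn.
apply: (rst_trans _ _ _ _ _ E); apply: IH => //.
have : size (a :: w) = size (v ++ u) by rewrite dw !size_cat addnC.
rewrite dvu /= size_cat /= Hw; lia.
Qed.

Theorem mainTheorem5 (K K' : seq letter) :
  gauss_ok K -> gauss_ok K' -> diag_equivalent K K'.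
Proof.
move=> gK gK'.
apply: (rst_trans _ _ _ [::]); first exact: (to_nil (size K)).
apply: rst_sym; exact: (to_nil (size K')).
Qed.
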